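(* Let $h>0$, let $\Omega\subset\mathbb{R}^2$ be a bounded domain and $\vec c\in\mathbb{R}^2$. With the discrete Heaviside function $H$ and $\operatorname{G}H$ as in the context, \[ \sum_{i,j}(\operatorname{G}H)_{ij}=0\qquad\text{and}\qquad\sum_{i,j}\big((x_i,y_j)-\vec c\big)\times(\operatorname{G}H)_{ij}=0, \] where the sums run over all $(i,j)\in\mathbb{Z}^2$.
   Context: $x_i=ih$, $y_j=jh$, $x_{i\pm1/2}=(i\pm\frac12)h$; edges $E_{i+1/2,j}=\{x_{i+1/2}\}\times[y_{j-1/2},y_{j+1/2}]$, $E_{i,j+1/2}=[x_{i-1/2},x_{i+1/2}]\times\{y_{j+1/2}\}$. Discrete Heaviside: $H_{i+1/2,j}=\mathrm{length}(E_{i+1/2,j}\cap\Omega)/h$, $H_{i,j+1/2}=\mathrm{length}(E_{i,j+1/2}\cap\Omega)/h$. $(\operatorname{G}H)_{ij}=\big((H_{i+1/2,j}-H_{i-1/2,j})/h,\;(H_{i,j+1/2}-H_{i,j-1/2})/h\big)$. The planar cross product is the scalar $(a_1,a_2)\times(b_1,b_2)=a_1b_2-a_2b_1$. *)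

(* Defs.v *)
From HB Require Import structures.
From mathcomp Require Import all_boot all_order all_algebra.
From mathcomp Require Import all_classical all_reals all_analysis.
Set Implicit Arguments. Unset Strict Implicit. Unset Printing Implicit Defensive.
Import Order.TTheory GRing.Theory Num.Theory.
Local Open Scope classical_set_scope.
Local Open Scope ring_scope.

Section Defs.
Variable R : realType.

Definition gridpt (h : R) (k : int) : R := k%:~R * h.
Definition halfpt (h : R) (k : int) : R := (k%:~R + 2^-1) * h.

(* length of the vertical edge E_{i+1/2,j} ∩ Ω  and horizontal edge E_{i,j+1/2} ∩ Ω,
   as Lebesgue measure of the 1D section *)
Definition len_vert (h : R) (Om : set (R * R)) (i j : int) : R :=
  fine (lebesgue_measure
    [set y : R | halfpt h (j - 1) <= y <= halfpt h j /\ Om (halfpt h i, y)]).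
Definition len_horiz (h : R) (Om : set (R * R)) (i j : int) : R :=
  fine (lebesgue_measure
    [set x : R | halfpt h (i - 1) <= x <= halfpt h i /\ Om (x, halfpt h j)]).

Definition Hv (h : R) Om (i j : int) : R := len_vert h Om i j / h.
Definition Hh (h : R) Om (i j : int) : R := len_horiz h Om i j / h.

Definition GH (h : R) Om (k : int * int) : R * R :=
  let: (i, j) := k in
  ((Hv h Om i j - Hv h Om (i - 1) j) / h, (Hh h Om i j - Hh h Om i (j - 1)) / h).

Definition cross2 (a b : R * R) : R := a.1 * b.2 - a.2 * b.1.

Definition bounded2 (Om : set (R * R)) : Prop :=
  exists M : R, forall p, Om p -> `|p.1| <= M /\ `|p.2| <= M.

Definition domain2 (Om : set (R * R)) : Prop :=
  open (Om : set (R^o * R^o)) /\ connected (Om : set (R^o * R^o)) /\ Om !=set0.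
End Defs.

(* Main.v *)
Require Import Defs.
From HB Require Import structures.
From mathcomp Require Import all_boot all_order all_algebra.
From mathcomp Require Import all_classical all_reals all_analysis.
From mathcomp Require Import ring lra zify.
Import Order.TTheory GRing.Theory Num.Theory.
Local Open Scope classical_set_scope.
Local Open Scope ring_scope.

Definition intbox (N : int) : set int := [set z | -N <= z <= N].
Lemma finite_intbox N : finite_set (intbox N).
Proof.
apply: (sub_finite_set _ (finite_image (fun m : nat => m%:Z - N) (finite_II (absz (2*N+1))))).
move=> z /andP[z1 z2]; exists (absz (z + N)).
  rewrite /= /mkset; lia.
rewrite /=; lia.
Qed.

Definition box (N : int) : set (int * int) := intbox N `*` intbox N.
Lemma finite_box N : finite_set (box N).
Proof. exact: finite_setX (finite_intbox N) (finite_intbox N). Qed.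

Section S.
Variable R : realType.
Lemma tele (B : set (int * int)) (a : int * int -> R) (s : int * int -> int * int) :
  finite_set B -> bijective s ->
  (forall k, ~ B k -> a k = 0) -> (forall k, ~ B k -> a (s k) = 0) ->
  \sum_(k \in [set: int * int]) (a k - a (s k)) = 0.
Proof.
move=> fB bs Ha Has.
rewrite -(fsbig_widen B) //; last first.
  by move=> k [_ /= nB]; rewrite /preimage /= Ha // Has // subrr.
rewrite fsbig_finite // big_split /= sumrN -!fsbig_finite //.
rewrite (fsbig_widen B setT a) //; last by move=> k [_ nB]; exact: Ha.
rewrite (fsbig_widen B setT (fun k => a (s k))) //; last by move=> k [_ nB]; exact: Has.
by rewrite -(reindex_fsbigT s a) // subrr.
Qed.

Lemma fine_meas_ne0 (A : set R) : fine (lebesgue_measure A) != 0 -> exists y, A y.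
Proof.
move=> H; apply/set0P; apply: contra H => /eqP ->; by rewrite measure0.
Qed.

Lemma hb_up (h M : R) (i : int) : 0 < h ->
  halfpt h i <= M -> i <= Num.ceil (M / h).
Proof.
move=> h0; rewrite /halfpt => H1.
have c1 : M / h <= (Num.ceil (M/h))%:~R by apply: Num.Theory.ceil_ge.
have c2 : M <= (Num.ceil (M/h))%:~R * h by rewrite -ler_pdivrMr.
set c := Num.ceil (M/h) in c1 c2 *.
have a1 : i%:~R < (c + 1)%:~R :> R by rewrite intrD; nra.
rewrite ltr_int in a1; lia.
Qed.

Lemma hb_low (h M : R) (i : int) : 0 < h ->
  - M <= halfpt h i -> - Num.ceil (M / h) <= i.
Proof.
move=> h0; rewrite /halfpt => H1.
have c1 : M / h <= (Num.ceil (M/h))%:~R by apply: Num.Theory.ceil_ge.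
have c2 : M <= (Num.ceil (M/h))%:~R * h by rewrite -ler_pdivrMr.
set c := Num.ceil (M/h) in c1 c2 *.
have a2 : (- c - 1)%:~R < i%:~R :> R by rewrite intrB intrN; nra.
rewrite ltr_int in a2; lia.
Qed.

Lemma fsumB (B : set (int * int)) (f g : int * int -> R) :
  finite_set B -> (forall k, ~ B k -> f k = 0) -> (forall k, ~ B k -> g k = 0) ->
  \sum_(k \in [set: int * int]) (f k - g k) =
  \sum_(k \in [set: int * int]) f k - \sum_(k \in [set: int * int]) g k.
Proof.
move=> fB Hf Hg.
rewrite -(fsbig_widen B) //; last first.
  by move=> k [_ /= nB]; rewrite /preimage /= Hf // Hg // subrr.
rewrite fsbig_finite // big_split /= sumrN -!fsbig_finite //.
rewrite (fsbig_widen B setT f) //; last by move=> k [_ nB]; exact: Hf.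
by rewrite (fsbig_widen B setT g) //; last by move=> k [_ nB]; exact: Hg.
Qed.

Lemma HvZ (h M : R) (Om : set (R * R)) (i j : int) : 0 < h ->
  (forall p, Om p -> `|p.1| <= M /\ `|p.2| <= M) ->
  ~ box (Num.ceil (M / h) + 1) (i, j) -> Hv h Om i j = 0.
Proof.
move=> h0 HM nb; apply: contra_notP nb => /eqP H.
have : len_vert h Om i j != 0 by apply: contra H => /eqP; rewrite /Hv => ->; rewrite mul0r.
move=> /fine_meas_ne0 [y [/andP[y1 y2] Oy]].
have [/ler_normlP[a1 a2] /ler_normlP[b1 b2]] := HM _ Oy; rewrite /= in a1 a2 b1 b2.
have u1 := hb_up _ _ _ h0 a2; have l1 := hb_low _ _ _ h0 (eqbRL (lerNl _ _) a1).
have u2 : halfpt h (j - 1) <= M by apply: le_trans b2.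
have l2 : - M <= halfpt h j by apply: le_trans y2; rewrite lerNl.
have := hb_up _ _ _ h0 u2; have := hb_low _ _ _ h0 l2.
rewrite /box /intbox; split => /=; apply/andP; split; lia.
Qed.

Lemma HhZ (h M : R) (Om : set (R * R)) (i j : int) : 0 < h ->
  (forall p, Om p -> `|p.1| <= M /\ `|p.2| <= M) ->
  ~ box (Num.ceil (M / h) + 1) (i, j) -> Hh h Om i j = 0.
Proof.
move=> h0 HM nb; apply: contra_notP nb => /eqP H.
have : len_horiz h Om i j != 0 by apply: contra H => /eqP; rewrite /Hh => ->; rewrite mul0r.
move=> /fine_meas_ne0 [y [/andP[y1 y2] Oy]].
have [/ler_normlP[a1 a2] /ler_normlP[b1 b2]] := HM _ Oy; rewrite /= in a1 a2 b1 b2.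
have u1 := hb_up _ _ _ h0 b2; have l1 := hb_low _ _ _ h0 (eqbRL (lerNl _ _) b1).
have u2 : halfpt h (i - 1) <= M by apply: le_trans a2.
have l2 : - M <= halfpt h i by apply: le_trans y2; rewrite lerNl.
have := hb_up _ _ _ h0 u2; have := hb_low _ _ _ h0 l2.
rewrite /box /intbox; split => /=; apply/andP; split; lia.
Qed.

End S.

Lemma nbox_shift1 (L : int) (k : int * int) : ~ box (L + 1) k -> ~ box L (k.1 - 1, k.2).
Proof. case: k => i j; rewrite /box /intbox /= => H [/= /andP[a b] /andP[c d]]; apply: H; split; apply/andP; split => /=; lia. Qed.
Lemma nbox_shift2 (L : int) (k : int * int) : ~ box (L + 1) k -> ~ box L (k.1, k.2 - 1).
Proof. case: k => i j; rewrite /box /intbox /= => H [/= /andP[a b] /andP[c d]]; apply: H; split; apply/andP; split => /=; lia. Qed.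
Lemma nbox_shift0 (L : int) (k : int * int) : ~ box (L + 1) k -> ~ box L (k.1, k.2).
Proof. case: k => i j; rewrite /box /intbox /= => H [/= /andP[a b] /andP[c d]]; apply: H; split; apply/andP; split => /=; lia. Qed.

Lemma bij_s1 : bijective (fun k : int * int => (k.1 - 1, k.2)).
Proof. exists (fun k : int * int => (k.1 + 1, k.2)) => -[i j] /=; congr pair; ring. Qed.
Lemma bij_s2 : bijective (fun k : int * int => (k.1, k.2 - 1)).
Proof. exists (fun k : int * int => (k.1, k.2 + 1)) => -[i j] /=; congr pair; ring. Qed.

Theorem lemma4p5 (R : realType) (h : R) (Om : set (R * R)) (c : R * R) :
  0 < h -> domain2 Om -> bounded2 Om ->
  finite_set [set k : int * int | GH h Om k != (0, 0)] /\
  \sum_(k \in [set: int * int]) (GH h Om k).1 = 0 /\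
  \sum_(k \in [set: int * int]) (GH h Om k).2 = 0 /\
  \sum_(k \in [set: int * int])
     cross2 (gridpt h k.1 - c.1, gridpt h k.2 - c.2) (GH h Om k) = 0.
Proof.
move=> h0 _ [M HM].
set L := Num.ceil (M / h) + 1.
have Zv k : ~ box (L + 1) k -> Hv h Om k.1 k.2 = 0 /\ Hv h Om (k.1 - 1) k.2 = 0.
  move=> nb; split; apply: (@HvZ R h M Om _ _ h0 HM).
    exact: nbox_shift0 nb.
  exact: nbox_shift1 nb.
have Zh k : ~ box (L + 1) k -> Hh h Om k.1 k.2 = 0 /\ Hh h Om k.1 (k.2 - 1) = 0.
  move=> nb; split; apply: (@HhZ R h M Om _ _ h0 HM).
    exact: nbox_shift0 nb.
  exact: nbox_shift2 nb.
have fB := finite_box (L + 1).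
split.
  apply: (sub_finite_set _ fB) => -[i j] H; apply: contra_notP (elimT negP H) => nb; apply/negPn/eqP.
  have [a1 a2] := Zv _ nb; have [b1 b2] := Zh _ nb; simpl in a1, a2, b1, b2.
  by rewrite /GH a1 a2 b1 b2 !subrr !mul0r eqxx.
split.
  rewrite (eq_fsbigr (fun k => Hv h Om k.1 k.2 / h - Hv h Om (k.1 - 1) k.2 / h)); last first.
    by move=> [i j] _ /=; rewrite mulrBl.
  apply: (@tele R (box (L + 1)) (fun k => Hv h Om k.1 k.2 / h) (fun k => (k.1 - 1, k.2))) => //; first exact: bij_s1.
    by move=> k /Zv [-> _]; rewrite mul0r.
  by move=> k /Zv [_ ->]; rewrite mul0r.
split.
  rewrite (eq_fsbigr (fun k => Hh h Om k.1 k.2 / h - Hh h Om k.1 (k.2 - 1) / h)); last first.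
    by move=> [i j] _ /=; rewrite mulrBl.
  apply: (@tele R (box (L + 1)) (fun k => Hh h Om k.1 k.2 / h) (fun k => (k.1, k.2 - 1))) => //; first exact: bij_s2.
    by move=> k /Zh [-> _]; rewrite mul0r.
  by move=> k /Zh [_ ->]; rewrite mul0r.
rewrite (eq_fsbigr (fun k =>
   ((gridpt h k.1 - c.1) * Hh h Om k.1 k.2 / h - (gridpt h k.1 - c.1) * Hh h Om k.1 (k.2 - 1) / h)
 - ((gridpt h k.2 - c.2) * Hv h Om k.1 k.2 / h - (gridpt h k.2 - c.2) * Hv h Om (k.1 - 1) k.2 / h))); last first.
  by move=> [i j] _; rewrite /cross2 /=; ring.
rewrite (@fsumB R (box (L + 1))) //; last first.
- by move=> k /Zv [-> ->]; rewrite !mulr0 !mul0r subrr.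
- by move=> k /Zh [-> ->]; rewrite !mulr0 !mul0r subrr.
rewrite (@tele R (box (L + 1)) (fun k => (gridpt h k.1 - c.1) * Hh h Om k.1 k.2 / h) (fun k => (k.1, k.2 - 1))) //; first last.
- by move=> k /Zh [_ ->]; rewrite mulr0 mul0r.
- by move=> k /Zh [-> _]; rewrite mulr0 mul0r.
- exact: bij_s2.
rewrite (@tele R (box (L + 1)) (fun k => (gridpt h k.2 - c.2) * Hv h Om k.1 k.2 / h) (fun k => (k.1 - 1, k.2))) //; first by rewrite subrr.
- exact: bij_s1.
- by move=> k /Zv [-> _]; rewrite mulr0 mul0r.
- by move=> k /Zv [_ ->]; rewrite mulr0 mul0r.
Qed.
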